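(* There is a choice of the sample size $\ell=O(\log n)$ such that, for any weighted stream of $n$ updates, the Reduce-By-Sample-Median algorithm (defined in the context) with $k$ counters and sample size $\ell$ can be implemented to run in amortized constant time per stream update with probability at least $1-1/n$ (over the algorithm's random sampling), assuming counters are stored in a hash table supporting insertions, deletions and lookups in amortized $O(1)$ time and enumeration of all counters in $O(k)$ time.
   Context: A weighted stream over the universe $[m]=\{1,\dots,m\}$ is a sequence of updates $(i_1,\Delta_1),\dots,(i_n,\Delta_n)$ with $i_t\in[m]$ and real weights $\Delta_t>0$. The Reduce-By-Sample-Median algorithm with parameters $k\ge 1$ (number of counters) and $\ell\ge 1$ (sample size) maintains a set $T\subseteq[m]$ of at most $k$ items, each $j\in T$ carrying a nonnegative real counter $c(j)$; initially $T=\emptyset$. Update$(i,\Delta)$: if $i\in T$, set $c(i)\gets c(i)+\Delta$; else if $|T|<k$, add $i$ to $T$ with $c(i)=\Delta$; else call DecrementCounters(), and afterwards, if $\Delta\ge c^*$, add $i$ to $T$ with $c(i)=\Delta-c^*$. DecrementCounters(): sample $\ell$ counters uniformly at random from $T$ (fresh randomness in each call) and let $c^*$ be the median of the sampled counter values; for every $j\in T$ set $c(j)\gets c(j)-c^*$, and remove $j$ from $T$ if now $c(j)\le 0$. Estimate$(i)$ returns $c(i)$ if $i\in T$ and $0$ otherwise. *)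

(* Defs.v *)
From mathcomp Require Import all_boot all_order all_algebra.
Set Implicit Arguments. Unset Strict Implicit. Unset Printing Implicit Defensive.
Import Order.TTheory GRing.Theory Num.Theory.
Local Open Scope ring_scope.

(* Items are natural numbers (the universe [m] embeds in nat); weights are in
   an arbitrary real field R. *)
Section RBSM.
Variables (R : realFieldType) (k l : nat).

(* The set T with its counters, as a list of (item, counter) pairs
   (items pairwise distinct by construction). *)
Definition rstate := seq (nat * R).

(* Median of a sample: the element of index (size s)/2 (0-based) of the
   sorted sample; the exact median when the sample size is odd. *)
Definition smedian (s : seq R) : R := nth 0 (sort <=%R s) (size s)./2.

Definition decrement (T : rstate) (cs : R) : rstate :=
  [seq (p.1, p.2 - cs) | p <- T & cs < p.2].

(* One Update(i, d).  [smp] are the l sampled positions (uniform in 'I_k, with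
   replacement) used if DecrementCounters is called (then |T| = k).
   Returns the new state and the cost of the update in the model:
   1 for a hash-table lookup/insert/increment; k + l + 1 when
   DecrementCounters is called (O(k) enumeration of counters, O(l) sampling
   and linear-time median selection, plus O(1)). *)
Definition rbsm_update (T : rstate) (u : nat * R) (smp : {ffun 'I_l -> 'I_k})
  : rstate * nat :=
  let: (i, d) := u in
  if i \in map fst T then
    ([seq if p.1 == i then (p.1, p.2 + d) else p | p <- T], 1%N)
  else if (size T < k)%N then (rcons T (i, d), 1%N)
  else
    let cs := smedian [seq (nth (0%N, 0) T (val (smp j))).2 | j <- enum 'I_l] in
    let T' := decrement T cs in
    ((if cs <= d then rcons T' (i, d - cs) else T'), (k + l + 1)%N).

Definition rbsm_run n (str : 'I_n -> nat * R)
  (om : {ffun 'I_n -> {ffun 'I_l -> 'I_k}}) : rstate * nat :=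
  foldl (fun (acc : rstate * nat) t =>
           let r := rbsm_update acc.1 (str t) (om t) in (r.1, (acc.2 + r.2)%N))
        ([::], 0%N) (enum 'I_n).

Definition rbsm_cost n (str : 'I_n -> nat * R) (om : {ffun 'I_n -> {ffun 'I_l -> 'I_k}}) : nat := (rbsm_run str om).2.

Definition prob_cost_le (C n : nat) (str : 'I_n -> nat * R) : R :=
  (#|[set om : {ffun 'I_n -> {ffun 'I_l -> 'I_k}} | (rbsm_cost str om <= C * n)%N]|%:R
   / #|{: {ffun 'I_n -> {ffun 'I_l -> 'I_k}}}|%:R).

End RBSM.

(* Main.v *)
Require Import Defs.
From mathcomp Require Import all_boot all_order all_algebra zify lra.
Set Warnings "-notation-overridden,-ambiguous-paths".

Module M1.
Set Implicit Arguments. Unset Strict Implicit. Unset Printing Implicit Defensive.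

Lemma count_enum_card (T : finType) (P : pred T) :
  count P (enum T) = #|[set x | P x]|.
Proof.
rewrite -sum1_count -sum1_card big_enum_cond /=.
by apply: eq_bigl => x; rewrite inE.
Qed.

Lemma bin_le_exp n m : 'C(n, m) <= n ^ m.
Proof.
elim: n m => [|n IH] [|m] //=.
rewrite binS.
apply: (@leq_trans (n ^ m.+1 + n ^ m)); first by rewrite leq_add.
rewrite [n.+1 ^ m.+1]expnS mulSn addnC.
have h : n ^ m <= n.+1 ^ m by elim: (m) => // j IHj; rewrite !expnS leq_mul.
by rewrite leq_add // expnS leq_mul2l h orbT.
Qed.

Lemma bin_le_2exp n m : 'C(n, m) <= 2 ^ n.
Proof.
elim: n m => [|n IH] [|m] //=.
  by rewrite bin0 expn_gt0.
by rewrite binS expnS mul2n -addnn leq_add.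
Qed.

Definition upd n (X : finType) (om : {ffun 'I_n -> X}) (t : 'I_n) (x : X)
  : {ffun 'I_n -> X} := [ffun i => if i == t then x else om i].

Lemma swap_sum n (X : finType) (t : 'I_n) (g : {ffun 'I_n -> X} -> nat) :
  \sum_om \sum_(x : X) g (upd om t x) = #|X| * \sum_om g om.
Proof.
rewrite pair_big /=.
pose psi (p : {ffun 'I_n -> X} * X) := (upd p.1 t p.2, p.1 t).
have psiK : involutive psi.
  move=> [om x]; rewrite /psi /=; congr pair; last by rewrite ffunE eqxx.
  by apply/ffunP => i; rewrite !ffunE; case: eqP => // ->.
rewrite (reindex_inj (inv_inj psiK)) /=.
have -> : \sum_(i : {ffun 'I_n -> X} * X) g (upd (psi i).1 t (psi i).2) =
          \sum_(i : {ffun 'I_n -> X} * X) g i.1.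
  apply: eq_bigr => [[om x]] _; rewrite /psi /=; congr g.
  by apply/ffunP => i; rewrite !ffunE; case: eqP => // ->.
rewrite -(pair_big xpredT xpredT (fun om (x : X) => g om)) /=.
rewrite big_distrr /=; apply: eq_bigr => om _.
by rewrite sum_nat_const cardT -cardE mulnC.
Qed.

Lemma card_sum_bool (T : finType) (P : pred T) :
  #|[set x | P x]| = \sum_x (P x : nat).
Proof.
rewrite -sum1_card big_mkcond; apply: eq_bigr => x _; rewrite inE; by case: (P x).
Qed.

Lemma fiber n (X : finType) (t : 'I_n) (G B : pred {ffun 'I_n -> X}) s :
  (forall om x, G (upd om t x) = G om) ->
  (forall om, 2^s * #|[set x | B (upd om t x)]| <= #|X|) ->
  2^s * #|[set om | G om && B om]| <= #|[set om | G om]|.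
Proof.
move=> HG HB.
case: (posnP #|X|) => [X0|Xpos].
  suff -> : #|[set om | G om && B om]| = 0 by rewrite muln0.
  apply/eqP; rewrite cards_eq0; apply/eqP/setP => om; rewrite !inE.
  by have := card0_eq X0 (om t).
rewrite -(leq_pmul2l Xpos) !card_sum_bool mulnCA -(swap_sum t) big_distrr /=.
rewrite big_distrr /=; apply: leq_sum => om _.
have -> : \sum_(x : X) ((G (upd om t x) && B (upd om t x)) : nat)
          = G om * #|[set x | B (upd om t x)]|.
  rewrite card_sum_bool big_distrr /=; apply: eq_bigr => x _.
  by rewrite HG; case: (G om); case: (B _).
by rewrite mulnCA mulnC leq_mul2r HB orbT.
Qed.

Section Many.
Variables (n : nat) (X : finType) (s : nat).
Variable bad : 'I_n -> {ffun 'I_n -> X} -> bool.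
Hypothesis adapted : forall (t : 'I_n) (om om' : {ffun 'I_n -> X}),
  (forall i : 'I_n, i <= t -> om i = om' i) -> bad t om = bad t om'.
Hypothesis fib : forall t om, 2^s * #|[set x | bad t (upd om t x)]| <= #|X|.

Lemma allbad_bound (S : {set 'I_n}) :
  2^(s * #|S|) * #|[set om | [forall t in S, bad t om]]| <= #|{ffun 'I_n -> X}|.
Proof.
move: {2}#|S| (erefl #|S|) => N; elim: N S => [|N IH] S HS.
  by rewrite HS muln0 expn0 mul1n; apply: max_card.
have [t0 t0S] : exists t0, t0 \in S.
  by apply/set0Pn; rewrite -card_gt0 HS.
case: (arg_maxnP (fun i : 'I_n => val i) t0S) => t tS0 tmax.
have tS : t \in S := tS0.
set S' := S :\ t.
have HS' : #|S'| = N by move: HS; rewrite (cardsD1 t S) tS add1n => -[].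
pose G := fun om => [forall u in S', bad u om].
have HG : forall om x, G (upd om t x) = G om.
  move=> om x; apply: eq_forallb => u.
  case uS' : (u \in S'); last by [].
  rewrite !implyTb.
  apply: adapted => i iu; rewrite ffunE.
  case: eqP => // it; exfalso.
  move: uS'; rewrite !inE => /andP[ut uS].
  have := tmax u uS; rewrite -it => ti.
  have ui : u = i by apply/val_inj/eqP; rewrite eqn_leq; apply/andP; split.
  by rewrite ui it eqxx in ut.
have Heq : [set om | [forall t in S, bad t om]] = [set om | G om && bad t om].
  apply/setP => w; rewrite !inE; apply/forallP/andP.
    move=> H; split; last by have := H t; rewrite tS.
    by apply/forallP => u; apply/implyP; rewrite !inE => /andP[_ uS];
       have := H u; rewrite uS.
  move=> [/forallP H1 H2] u; apply/implyP => uS.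
  case: (eqVneq u t) => [->//|ut].
  by have := H1 u; rewrite !inE ut uS.
rewrite Heq HS mulnS expnD -mulnA.
apply: (leq_trans _ (IH S' HS')).
rewrite mulnCA HS' leq_mul2l; apply/orP; right.
exact: (fiber HG (fib t)).
Qed.

End Many.

Section Many2.
Variables (n : nat) (X : finType) (s : nat).
Variable bad : 'I_n -> {ffun 'I_n -> X} -> bool.
Hypothesis adapted : forall (t : 'I_n) (om om' : {ffun 'I_n -> X}),
  (forall i : 'I_n, i <= t -> om i = om' i) -> bad t om = bad t om'.
Hypothesis fib : forall t om, 2^s * #|[set x | bad t (upd om t x)]| <= #|X|.

Lemma manybad_bound m :
  2^(s * m) * #|[set om | m <= #|[set t | bad t om]|]|
    <= 'C(n, m) * #|{ffun 'I_n -> X}|.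
Proof.
pose Q om := [set t | bad t om].
have step1 : #|[set om | m <= #|Q om|]| <=
    \sum_(S : {set 'I_n} | #|S| == m) #|[set om | S \subset Q om]|.
  rewrite card_sum_bool.
  under [X in _ <= X]eq_bigr => S _ do rewrite card_sum_bool.
  rewrite exchange_big /=; apply: leq_sum => om _.
  case: (leqP m #|Q om|) => mQ; last by [].
  rewrite /=.
  have : 0 < #|[set S : {set 'I_n} | S \subset Q om & #|S| == m]|.
    by rewrite cards_draws bin_gt0.
  move/card_gt0P => [S]; rewrite inE => /andP[SQ Sm].
  by rewrite (bigD1 S) //= SQ.
apply: (leq_trans (leq_mul (leqnn _) step1)).
rewrite big_distrr /=.
apply: (@leq_trans (\sum_(S : {set 'I_n} | #|S| == m) #|{ffun 'I_n -> X}|)).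
  apply: leq_sum => S /eqP Sm.
  have -> : [set om | S \subset Q om] = [set om | [forall t in S, bad t om]].
    apply/setP => om; rewrite !inE; apply/subsetP/forallP => H t.
      by apply/implyP => tS; have := H t tS; rewrite inE.
    by move=> tS; rewrite inE; have := H t; rewrite tS.
  by rewrite -{1}Sm; apply: allbad_bound.
by rewrite sum_nat_cond_const card_draws card_ord.
Qed.
End Many2.

Lemma key_arith n k : 0 < k ->
  n * 'C(n, n %/ k + 1) <= 2 ^ ((minn (6 * k) (8 * (trunc_log 2 n).+1))./2 * (n %/ k + 1)).
Proof.
move=> k0.
set L := (trunc_log 2 n).+1; set m := n %/ k + 1.
have m1 : 1 <= m by rewrite /m addn1.
have nL : n < 2 ^ L by apply: trunc_log_ltn.
case: (leqP (6 * k) (8 * L)) => h.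
- have -> : (6 * k)./2 = 3 * k.
    have -> : 6 * k = (3 * k).*2 by rewrite -muln2; lia.
    by rewrite doubleK.
  have hkm : n < k * m by rewrite /m; lia.
  apply: (@leq_trans (2 ^ n * 2 ^ n)).
    apply: leq_mul; [exact: ltnW (ltn_expl _ _) | exact: bin_le_2exp].
  by rewrite -expnD leq_exp2l //; lia.
- have -> : (8 * L)./2 = 4 * L.
    have -> : 8 * L = (4 * L).*2 by rewrite -muln2; lia.
    by rewrite doubleK.
  apply: (@leq_trans (n * n ^ m)).
    by rewrite leq_mul2l bin_le_exp orbT.
  rewrite -expnS.
  apply: (@leq_trans ((2 ^ L) ^ m.+1)).
    by rewrite leq_exp2r // ltnW.
  by rewrite -expnM leq_exp2l //; nia.
Qed.

End M1.
Import M1.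

Import Order.TTheory GRing.Theory Num.Theory.
Local Open Scope ring_scope.

Module M2.
Set Implicit Arguments. Unset Strict Implicit. Unset Printing Implicit Defensive.
Local Open Scope ring_scope.

Section Sample.
Variables (R : realFieldType) (k l : nat) (v : 'I_k -> R).

Definition med (x : {ffun 'I_l -> 'I_k}) : R :=
  smedian [seq v (x j) | j <- enum 'I_l].

Definition sbad (x : {ffun 'I_l -> 'I_k}) : bool :=
  (8 * #|[set i : 'I_k | (v i <= med x)%R]| < k)%N.

Lemma median_count (x : {ffun 'I_l -> 'I_k}) : (0 < l)%N ->
  (l./2 < #|[set j : 'I_l | (v (x j) <= med x)%R]|)%N.
Proof.
move=> l0.
set sq := [seq v (x j) | j <- enum 'I_l].
set ss := sort <=%R sq.
have Hsz : size ss = l by rewrite size_sort size_map size_enum_ord.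
have -> : #|[set j : 'I_l | v (x j) <= med x]| = count (fun y => y <= med x) ss.
  have hp : perm_eq ss sq by rewrite perm_sort.
  by rewrite (permP hp) /sq count_map -count_enum_card; apply: eq_count.
rewrite -(cat_take_drop (l./2.+1) ss) count_cat.
apply: (leq_trans _ (leq_addr _ _)).
have hm : (l./2.+1 <= size ss)%N.
  by rewrite Hsz; move: l0; case: (l) => // l' _; by rewrite ltnS leq_half_double ltnS -addnn leq_addr.
suff /eqP -> : count (fun y => y <= med x) (take l./2.+1 ss) == size (take l./2.+1 ss).
  by rewrite size_takel.
rewrite -all_count; apply/allP => y /(nthP 0) [i].
rewrite size_takel // => il <-.
rewrite nth_take // /med /smedian -/sq -/ss size_map size_enum_ord.
have srt : sorted <=%R ss by apply: sort_sorted; exact: le_total.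
apply: (sorted_leq_nth le_trans lexx 0 srt); rewrite ?inE ?Hsz //.
- by rewrite -Hsz; exact: leq_trans il hm.
- by move: hm; rewrite Hsz.
Qed.

Definition Bset := [set i : 'I_k | (8 * #|[set j : 'I_k | (v j <= v i)%R]| < k)%N].

Lemma Bset_card : (8 * #|Bset| <= k)%N.
Proof.
case: (set_0Vmem Bset) => [->|[i0 i0B]]; first by rewrite cards0 muln0.
case: (@Order.TotalTheory.arg_maxP _ R _ i0 (fun i => i \in Bset) v i0B)
  => imax imB Hmax.
have sub : Bset \subset [set j : 'I_k | (v j <= v imax)%R].
  by apply/subsetP => j jB; rewrite inE; apply: Hmax.
apply: leq_trans (ltnW _); last by move: imB; rewrite inE; apply.
by rewrite leq_mul2l subset_leq_card ?orbT.
Qed.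

Lemma sbad_sub (x : {ffun 'I_l -> 'I_k}) : sbad x ->
  [set j : 'I_l | (v (x j) <= med x)%R] \subset [set j | x j \in Bset].
Proof.
move=> hb; apply/subsetP => j; rewrite !inE => hj.
apply: leq_ltn_trans hb; rewrite leq_mul2l subset_leq_card ?orbT //.
by apply/subsetP => i; rewrite !inE => hi; apply: le_trans hi hj.
Qed.

Lemma sample_bound : (0 < l)%N ->
  (2 ^ l./2 * #|[set x : {ffun 'I_l -> 'I_k} | sbad x]| <= k ^ l)%N.
Proof.
move=> l0.
set m := l./2.+1.
have ad : forall (t : 'I_l) (om om' : {ffun 'I_l -> 'I_k}),
   (forall i : 'I_l, (i <= t)%N -> om i = om' i) ->
   (om t \in Bset) = (om' t \in Bset).
  by move=> t om om' H; rewrite H.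
have fb : forall t (om : {ffun 'I_l -> 'I_k}),
   (2 ^ 3 * #|[set y | upd om t y t \in Bset]| <= #|'I_k|)%N.
  move=> t om.
  have -> : [set y | upd om t y t \in Bset] = Bset.
    by apply/setP => y; rewrite inE ffunE eqxx.
  by rewrite card_ord Bset_card.
have H := manybad_bound ad fb m.
rewrite card_ffun !card_ord in H.
have sub : (#|[set x : {ffun 'I_l -> 'I_k} | sbad x]| <=
           #|[set om : {ffun 'I_l -> 'I_k} | m <= #|[set t | om t \in Bset]|]|)%N.
  apply: subset_leq_card; apply/subsetP => x; rewrite !inE => hx.
  apply: leq_trans (median_count x l0) _.
  exact: subset_leq_card (sbad_sub hx).
have e2 : (2 ^ l./2 * 2 ^ l <= 2 ^ (3 * m))%N.
  rewrite -expnD leq_exp2l //.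
  have := odd_double_half l; rewrite -muln2.
  have := leq_b1 (odd l); rewrite /m; lia.
rewrite -(@leq_pmul2l (2 ^ (3 * m))) ?expn_gt0 //.
apply: (@leq_trans (2 ^ l./2 * ('C(l, m) * k ^ l))).
  rewrite mulnCA leq_mul2l; apply/orP; right.
  by apply: leq_trans H; rewrite leq_mul2l sub orbT.
apply: (@leq_trans (2 ^ l./2 * 2 ^ l * k ^ l)).
  by rewrite -mulnA leq_mul2l leq_mul2r bin_le_2exp !orbT.
by rewrite leq_mul2r e2 orbT.
Qed.

End Sample.

Lemma count_prefix (T : eqType) (x0 : T) (s : seq T) (P : pred T) k :
  (k <= size s)%N -> (#|[set j : 'I_k | P (nth x0 s j)]| <= count P s)%N.
Proof.
move=> ks.
rewrite -count_enum_card.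
have -> : count (fun j : 'I_k => P (nth x0 s j)) (enum 'I_k) = count P (take k s).
  rewrite -(map_nth_iota0 x0 ks) -val_enum_ord -map_comp count_map.
  by apply: eq_count.
by rewrite -{2}(cat_take_drop k s) count_cat leq_addr.
Qed.

Section Run.
Variables (R : realFieldType) (k l : nat).

Definition vT (T : rstate R) : 'I_k -> R := fun i => (nth (0%N, 0) T i).2.
Definition dec (T : rstate R) (i : nat) : bool :=
  (i \notin map fst T) && ~~ (size T < k)%N.

Lemma update_nodec T i d (x : {ffun 'I_l -> 'I_k}) : ~~ dec T i ->
  (rbsm_update T (i, d) x).2 = 1%N /\
  (size (rbsm_update T (i, d) x).1 <= (size T).+1)%N.
Proof.
rewrite /dec /rbsm_update negb_and negbK => H.
case: ifP => [_|iT] /=; first by rewrite size_map.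
by move: H; rewrite iT /= negbK => -> /=; rewrite size_rcons.
Qed.

Lemma update_dec T i d (x : {ffun 'I_l -> 'I_k}) : dec T i ->
  let cs := med (vT T) x in
  (rbsm_update T (i, d) x).2 = (k + l + 1)%N /\
  (size (rbsm_update T (i, d) x).1 + count (fun p : nat * R => (p.2 <= cs)%R) T <= (size T).+1)%N /\
  (#|[set j : 'I_k | (vT T j <= cs)%R]| <= count (fun p : nat * R => (p.2 <= cs)%R) T)%N.
Proof.
rewrite /dec => /andP[iT kT]; set cs := med (vT T) x.
have kT' : (k <= size T)%N by rewrite leqNgt.
split; last split.
- by rewrite /rbsm_update (negbTE iT) (negbTE kT).
- rewrite /rbsm_update (negbTE iT) (negbTE kT) /=.
  have e : size (decrement T cs) + count (fun p : nat * R => (p.2 <= cs)%R) T = size T.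
    rewrite /decrement size_map size_filter -(count_predC (fun p : nat * R => (cs < p.2)%R)).
    congr addn; apply: eq_count => p /=; by rewrite leNgt.
  rewrite -/cs.
  case: ifP => _; last exact: (leq_trans (eq_leq e) (leqnSn _)).
  by rewrite size_rcons addSn ltnS; exact: (eq_leq e).
- exact: count_prefix.
Qed.

End Run.

Section Run2.
Variables (R : realFieldType) (k l n : nat) (str : 'I_n -> nat * R).
Notation Om := {ffun 'I_n -> {ffun 'I_l -> 'I_k}}.

Definition Fstep (om : Om) (acc : rstate R * nat) (t : 'I_n) : rstate R * nat :=
  let r := rbsm_update acc.1 (str t) (om t) in (r.1, (acc.2 + r.2)%N).
Definition pre (om : Om) (t : nat) :=
  foldl (Fstep om) ([::], 0%N) (take t (enum 'I_n)).

Lemma run_pre (om : Om) : rbsm_run str om = pre om n.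
Proof. by rewrite /pre take_oversize ?size_enum_ord. Qed.

Lemma pre_S (om : Om) (u : 'I_n) : pre om u.+1 = Fstep om (pre om u) u.
Proof.
rewrite /pre (take_nth u) ?size_enum_ord // foldl_rcons; congr Fstep.
by apply: val_inj; rewrite /= nth_enum_ord.
Qed.

Lemma pre_adapted t (om om' : Om) :
  (forall i : 'I_n, (i < t)%N -> om i = om' i) -> pre om t = pre om' t.
Proof.
elim: t => [|t IH] H; first by rewrite /pre !take0.
have IH' : pre om t = pre om' t by apply: IH => i it; apply: H; exact: ltnW.
case: (ltnP t n) => tn.
  have -> : t = val (Ordinal tn) by [].
  by rewrite !pre_S /= IH' /Fstep H.
move: IH'; rewrite /pre !take_oversize ?size_enum_ord //; exact: leqW.
Qed.

Definition badp (om : Om) (u : 'I_n) : bool :=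
  dec k (pre om u).1 (str u).1 && sbad (vT (pre om u).1) (om u).
Definition goodp (om : Om) (u : 'I_n) : bool :=
  dec k (pre om u).1 (str u).1 && ~~ sbad (vT (pre om u).1) (om u).

Lemma inv (om : Om) t : (t <= n)%N ->
  (k * count (goodp om) (take t (enum 'I_n)) + 8 * size (pre om t).1 <= 8 * t)%N /\
  ((pre om t).2 <= t + (k + l) * (count (goodp om) (take t (enum 'I_n))
                                  + count (badp om) (take t (enum 'I_n))))%N.
Proof.
elim: t => [_|t IH tn]; first by rewrite /pre !take0 /=; split; lia.
have [IH1 IH2] := IH (ltnW tn).
set u := Ordinal tn.
have eS : pre om t.+1 = Fstep om (pre om t) u by rewrite (pre_S om u).
rewrite (take_nth u) ?size_enum_ord // -cats1 !count_cat /=.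
have nthu : nth u (enum 'I_n) t = u by apply: val_inj; rewrite /= nth_enum_ord.
rewrite nthu eS /Fstep /goodp /badp /=.
move: IH1 IH2.
set G := count _ _; set B := count _ _.
set T := (pre om t).1; set c := (pre om t).2.
case Es : (str u) => [i d].
case: (boolP (dec k T i)) => hd.
  have [h1 [h2 h3]] := update_dec d (om u) hd.
  move: h1 h2 h3; case: (rbsm_update T (i, d) (om u)) => T' cst /= -> h2 h3.
  case: (boolP (sbad (vT T) (om u))) => hs /= IH1 IH2.
    by split; lia.
  move: hs; rewrite /sbad -leqNgt => hs.
  have hk := leq_trans hs (leq_mul (leqnn 8) h3).
  by split; lia.
have [h1 h2] := update_nodec d (om u) hd.
move: h1 h2; case: (rbsm_update T (i, d) (om u)) => T' cst /= -> h2.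
by move=> IH1 IH2; split; lia.
Qed.

Lemma cost_bound (om : Om) : (l <= 6 * k)%N ->
  (k * #|[set u | badp om u]| <= n)%N -> (rbsm_cost str om <= 64 * n)%N.
Proof.
move=> lk hb.
rewrite /rbsm_cost run_pre.
have [h1 h2] := inv om (leqnn n).
rewrite take_oversize ?size_enum_ord // in h1 h2.
rewrite -count_enum_card in hb.
move: h1 h2 hb.
set G := count _ _; set B := count _ _ => h1 h2 hb.
have e1 : (l * G <= 6 * k * G)%N by rewrite leq_mul2r lk orbT.
have e2 : (l * B <= 6 * k * B)%N by rewrite leq_mul2r lk orbT.
lia.
Qed.

End Run2.

Section Final.
Variables (R : realFieldType) (k l n : nat) (str : 'I_n -> nat * R).
Notation Om := {ffun 'I_n -> {ffun 'I_l -> 'I_k}}.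

Lemma badp_adapted (t : 'I_n) (om om' : Om) :
  (forall i : 'I_n, (i <= t)%N -> om i = om' i) -> badp str om t = badp str om' t.
Proof.
move=> H; rewrite /badp (@pre_adapted _ _ _ _ _ t om om') ?H //.
by move=> i it; apply: H; exact: ltnW.
Qed.

Lemma badp_fib (t : 'I_n) (om : Om) : (0 < l)%N ->
  (2 ^ l./2 * #|[set x | badp str (upd om t x) t]| <= #|{ffun 'I_l -> 'I_k}|)%N.
Proof.
move=> l0.
have pe : forall x, pre str (upd om t x) t = pre str om t.
  move=> x; apply: pre_adapted => i it; rewrite ffunE.
  by case: eqP => // e; rewrite e ltnn in it.
rewrite card_ffun !card_ord.
apply: leq_trans (sample_bound (vT (pre str om t).1) l0).
rewrite leq_mul2l; apply/orP; right.
apply: subset_leq_card; apply/subsetP => x; rewrite !inE /badp pe ffunE eqxx.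
by case/andP.
Qed.

End Final.


End M2.
Import M2.

Theorem theorem7 :
  exists (c C : nat) (ell : nat -> nat -> nat),
    (forall n k, (1 <= ell n k <= c * (trunc_log 2 n).+1)%N) /\
    forall (R : realFieldType) (k n : nat) (str : 'I_n -> nat * R),
      (1 <= k)%N -> (forall t, 0 < (str t).2) ->
      1 - n%:R^-1 <= prob_cost_le k (ell n k) C str.
Proof.
exists 8%N, 64%N, (fun n k => maxn 1 (minn (6 * k) (8 * (trunc_log 2 n).+1))).
split.
  move=> n k; rewrite leq_maxl /= geq_max muln_gt0 /=.
  exact: geq_minr.
move=> R k n str k1 _.
set L := (trunc_log 2 n).+1.
set l := maxn 1 (minn (6 * k) (8 * L)).
have hl : l = minn (6 * k) (8 * L).
  apply/maxn_idPr; rewrite leq_min muln_gt0 k1 /=; lia.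
have l0 : (0 < l)%N by rewrite /l leq_maxl.
have lk : (l <= 6 * k)%N by rewrite hl geq_minl.
set m := (n %/ k + 1)%N.
set Bad := [set om : {ffun 'I_n -> {ffun 'I_l -> 'I_k}} |
             (m <= #|[set t | badp str om t]|)%N].
have HB := @manybad_bound n _ l./2 (fun t om => badp str om t) (@badp_adapted R k l n str)
            (fun t om => badp_fib str t om l0) m.
have key : (n * 'C(n, m) <= 2 ^ (l./2 * m))%N by rewrite hl; apply: key_arith.
set o := #|{ffun 'I_n -> {ffun 'I_l -> 'I_k}}|.
have nB : (n * #|Bad| <= o)%N.
  rewrite -(@leq_pmul2l (2 ^ (l./2 * m))) ?expn_gt0 // mulnCA.
  apply: (leq_trans (leq_mul (leqnn n) HB)).
  by rewrite mulnA leq_mul2r key orbT.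
have n0B : n = 0%N -> #|Bad| = 0%N.
  move=> n0; apply/eqP; rewrite -leqn0.
  rewrite -(@leq_pmul2l (2 ^ (l./2 * m))) ?expn_gt0 // muln0.
  by apply: leq_trans HB _; rewrite n0 bin_small ?mul0n // /m; lia.
set Good := [set om : {ffun 'I_n -> {ffun 'I_l -> 'I_k}} |
              (rbsm_cost str om <= 64 * n)%N].
have sub : ~: Bad \subset Good.
  apply/subsetP => om; rewrite !inE -ltnNge => hm.
  apply: cost_bound => //.
  have : (#|[set t | badp str om t]| <= n %/ k)%N by move: hm; rewrite /m addn1 ltnS.
  move=> h; apply: leq_trans (leq_mul (leqnn k) h) _.
  by rewrite mulnC leq_trunc_div.
have hbg : (o <= #|Bad| + #|Good|)%N.
  apply: (@leq_trans (#|Bad| + #|~: Bad|)); last by rewrite leq_add2l subset_leq_card.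
  rewrite cardsC; exact: leqnn.
have hgo : (#|Good| <= o)%N by apply: max_card.
have opos : (0 < o)%N.
  by rewrite /o card_ffun card_ffun !card_ord expn_gt0 expn_gt0 k1.
rewrite /prob_cost_le -/l -/Good -/o.
have opos' : (0 : R) < o%:R by rewrite ltr0n.
rewrite ler_pdivlMr //.
case: (posnP n) => [n0|npos].
  have b0 := n0B n0.
  have -> : (n%:R^-1 : R) = 0 by rewrite n0 invr0.
  rewrite subr0 mul1r.
  by rewrite ler_nat; move: hbg; rewrite b0.
have h1 : (n * o <= n * #|Good| + o)%N.
  apply: (leq_trans (leq_mul (leqnn n) hbg)).
  by rewrite mulnDr addnC leq_add2l.
have h1' : (n%:R * o%:R <= n%:R * #|Good|%:R + o%:R :> R).
  by rewrite -!natrM -natrD ler_nat.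
have npos' : (0 : R) < n%:R by rewrite ltr0n.
have h2 : (n%:R^-1 * (n%:R * o%:R) <= n%:R^-1 * (n%:R * #|Good|%:R + o%:R) :> R).
  by rewrite ler_wpM2l // invr_ge0 ltW.
rewrite mulrA mulVf ?gt_eqF // mul1r mulrDr mulrA mulVf ?gt_eqF // mul1r in h2.
rewrite mulrBl mul1r.
lra.
Qed.
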